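(* Let $(X,d)$ be a metric space and let $\ell:X\to[0,+\infty)$ be a lower semicontinuous function with $\inf_X\ell=0$. Then: (i) if $\lambda>0$, the equation $(\mathcal{G}_\lambda)$ has at least one solution in $\mathrm{LSC}(X)$; (ii) if $\ell$ satisfies hypothesis $(H_0)$, then $(\mathcal{G}_0)$ has at least one solution in $\mathrm{LSC}(X)$. In addition, if $X$ is complete, then $(\mathcal{G}_0)$ has a solution if and only if $\ell$ satisfies $(H_0)$.
   Context: Global slope: $G[u](x)=\sup_{y\neq x}\frac{(u(x)-u(y))_+}{d(x,y)}$ if $u(x)<+\infty$, $G[u](x)=+\infty$ otherwise. For $\lambda\ge0$, equation $(\mathcal{G}_\lambda)$: $\lambda u+G[u]=\ell$ on $X$ with $\inf_X u=0$. A solution is a lower semicontinuous $u:X\to\mathbb{R}\cup\{+\infty\}$ with $\inf_X u=0$ and $\lambda u(x)+G[u](x)=\ell(x)$ for all $x\in X$. $\mathrm{LSC}(X)$ denotes the set of real-valued lower semicontinuous functions on $X$. Hypothesis $(H_0)$: there is a sequence $\{\bar x_n\}_n\subset X$ with $\sum_{n=0}^\infty\ell(\bar x_n)d(\bar x_n,\bar x_{n+1})<+\infty$ and $\lim_{n\to\infty}\ell(\bar x_n)=0$. *)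

(* Defs.v *)
From Stdlib Require Import Reals.
From Coquelicot Require Import Coquelicot.
Open Scope R_scope.

Definition is_metric {X : Type} (d : X -> X -> R) : Prop :=
  (forall x y, 0 <= d x y) /\
  (forall x y, d x y = 0 <-> x = y) /\
  (forall x y, d x y = d y x) /\
  (forall x y z, d x z <= d x y + d y z).

Definition metric_complete {X : Type} (d : X -> X -> R) : Prop :=
  forall s : nat -> X,
    (forall eps, 0 < eps -> exists N, forall m n, (N <= m)%nat -> (N <= n)%nat ->
        d (s m) (s n) < eps) ->
    exists x, forall eps, 0 < eps -> exists N, forall n, (N <= n)%nat -> d (s n) x < eps.

Definition lsc_Rbar {X : Type} (d : X -> X -> R) (u : X -> Rbar) : Prop :=
  forall x (c : R), Rbar_lt (Finite c) (u x) ->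
    exists delta, 0 < delta /\ forall y, d x y < delta -> Rbar_lt (Finite c) (u y).

Definition lsc_R {X : Type} (d : X -> X -> R) (f : X -> R) : Prop :=
  lsc_Rbar d (fun x => Finite (f x)).

Definition inf_is_zero {X : Type} (u : X -> Rbar) : Prop :=
  (forall x, Rbar_le (Finite 0) (u x)) /\
  (forall eps, 0 < eps -> exists x, Rbar_lt (u x) (Finite eps)).

(* For u(x) = a finite: the reals z with z <= 0 or z <= (a - u y)/d(x,y) for some y <> x.
   Its supremum (in [0,+oo]) is sup_{y<>x} (u(x)-u(y))_+ / d(x,y). *)
Definition slope_set {X : Type} (d : X -> X -> R) (u : X -> Rbar) (x : X) (a : R)
  (z : R) : Prop :=
  z <= 0 \/ exists y, y <> x /\ Rbar_le (Rbar_plus (u y) (Finite (z * d x y))) (Finite a).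

Definition global_slope {X : Type} (d : X -> X -> R) (u : X -> Rbar) (x : X) : Rbar :=
  match u x with
  | Finite a => Lub_Rbar (slope_set d u x a)
  | _ => p_infty
  end.

Definition is_solution {X : Type} (d : X -> X -> R) (lam : R) (ell : X -> R)
  (u : X -> Rbar) : Prop :=
  lsc_Rbar d u /\ inf_is_zero u /\
  forall x, Rbar_plus (Rbar_mult (Finite lam) (u x)) (global_slope d u x) = Finite (ell x).

Definition has_LSC_solution {X : Type} (d : X -> X -> R) (lam : R) (ell : X -> R) : Prop :=
  exists v : X -> R, lsc_R d v /\ is_solution d lam ell (fun x => Finite (v x)).

Definition H0 {X : Type} (d : X -> X -> R) (ell : X -> R) : Prop :=
  exists xs : nat -> X,
    ex_series (fun n => ell (xs n) * d (xs n) (xs (S n))) /\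
    is_lim_seq (fun n => ell (xs n)) 0.

(* Main.v *)
Require Import Defs.
From Stdlib Require Import Reals Lra Lia Psatz Classical ClassicalEpsilon List.
From Coquelicot Require Import Coquelicot.
Open Scope R_scope.

Lemma metric_pos {X} (d : X -> X -> R) x y : is_metric d -> y <> x -> 0 < d x y.
Proof.
  intros [H1 [H2 _]] Hne. destruct (H1 x y) as [h|h]; auto.
  exfalso; apply Hne; symmetry; apply H2; auto.
Qed.

Definition uinf (E : R -> Prop) : R := real (Glb_Rbar E).

Lemma uinf_spec (E : R -> Prop) : (exists e, E e) -> (forall e, E e -> 0 <= e) ->
  (forall e, E e -> uinf E <= e) /\ (forall eta, 0 < eta -> exists e, E e /\ e < uinf E + eta)
  /\ 0 <= uinf E.
Proof.
  intros [e0 He0] Hpos. unfold uinf.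
  destruct (Glb_Rbar_correct E) as [Hlb Hgr].
  assert (H0 : Rbar_le (Finite 0) (Glb_Rbar E)).
  { apply Hgr. intros e He. simpl. auto. }
  assert (H1 := Hlb e0 He0).
  destruct (Glb_Rbar E) as [m| |]; simpl in *; try contradiction.
  split; [intros e He; exact (Hlb e He)|split; [|exact H0]].
  - intros eta Heta. apply NNPP. intro Hn.
    assert (Hb : Rbar_le (Finite (m + eta)) (Finite m)).
    { apply Hgr. intros e He. simpl. apply Rnot_lt_le. intro Hlt. apply Hn. exists e; auto. }
    simpl in Hb. lra.
Qed.

Lemma le_eps (a b : R) : (forall eta, 0 < eta -> a <= b + eta) -> a <= b.
Proof.
  intros H. apply Rnot_lt_le. intro Hlt. specialize (H ((a - b)/2)). lra.
Qed.

Fixpoint cost {X} (d : X -> X -> R) (ell : X -> R) (lam : R) (x : X) (c : list X) : R :=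
  match c with
  | nil => ell x / lam
  | y :: c' => (ell x * d x y + cost d ell lam y c') / (1 + lam * d x y)
  end.

Lemma cost_cons {X} (d : X -> X -> R) ell lam x y c : 0 <= lam -> 0 <= d x y ->
  cost d ell lam x (y :: c) * (1 + lam * d x y) = ell x * d x y + cost d ell lam y c.
Proof. intros. simpl. field. nra. Qed.

Lemma cost_pos {X} (d : X -> X -> R) ell lam x c : is_metric d -> 0 < lam -> (forall x, 0 <= ell x) ->
  0 <= cost d ell lam x c.
Proof.
  intros Hm Hl He. revert x. induction c as [|y c IH]; intro x; simpl.
  - apply Rdiv_le_0_compat; auto.
  - destruct Hm as [Hd _]. apply Rdiv_le_0_compat.
    + specialize (IH y). specialize (Hd x y). specialize (He x). nra.
    + specialize (Hd x y). nra.
Qed.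

Lemma exit_lemma {X} (d : X -> X -> R) ell lam (u : X -> R) x0 delta L :
  is_metric d -> 0 < lam ->
  (forall y c, u y <= cost d ell lam y c) ->
  (forall x', d x0 x' < delta -> L <= ell x') ->
  forall c x', d x0 x' < delta ->
  L <= lam * cost d ell lam x' c \/
  exists y P, delta <= d x0 y /\ 1 + lam * d x' y <= P /\
     L * (P - 1) + lam * u y <= lam * P * cost d ell lam x' c.
Proof.
  intros Hm Hl Hu HL c. induction c as [|y c IH]; intros x' Hx'.
  - left. simpl. specialize (HL x' Hx').
    replace (lam * (ell x' / lam)) with (ell x') by (field; lra). lra.
  - assert (Hd := proj1 Hm). pose proof (Hd x' y) as HD.
    pose proof (cost_cons d ell lam x' y c (Rlt_le _ _ Hl) HD) as Hcc.
    set (K := cost d ell lam x' (y :: c)) in *. clearbody K.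
    assert (Htri0 : forall y', d x' y' <= d x' y + d y y') by (intro; apply Hm).
    set (D := d x' y) in *. assert (HDeq : d x' y = D) by reflexivity. clearbody D.
    pose proof (HL x' Hx') as HLx.
    destruct (Rlt_le_dec (d x0 y) delta) as [Hin|Hout].
    + destruct (IH y Hin) as [Hleft|[y' [P' [H1 [H2 H3]]]]].
      * left. assert (HQ : 0 < 1 + lam * D) by nra.
        assert (L * (1 + lam * D) <= lam * K * (1 + lam * D)).
        { rewrite Rmult_assoc, Hcc. assert (0 <= lam * D * (ell x' - L)) by (apply Rmult_le_pos; [apply Rmult_le_pos|]; lra). nra. }
        apply Rmult_le_reg_r in H; auto.
      * right. exists y', ((1 + lam * D) * P'). split; auto.
        pose proof (Htri0 y') as Htri.
        pose proof (Hd y y').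
        assert (HP' : 1 <= P') by nra.
        split.
        -- assert (lam * D * (P' - 1) >= 0) by (apply Rle_ge, Rmult_le_pos; nra). assert (lam * d x' y' <= lam * (D + d y y')) by (apply Rmult_le_compat_l; lra). nra.
        -- assert (lam * ((1 + lam * D) * P') * K = lam * P' * (ell x' * D + cost d ell lam y c))
             by (rewrite <- Hcc; ring).
           rewrite H0.
           assert (0 <= lam*D*P') by (apply Rmult_le_pos; [apply Rmult_le_pos|]; lra).
           assert (L * (lam*D*P') <= ell x' * (lam*D*P')) by (apply Rmult_le_compat_r; lra).
           lra.
    + right. exists y, (1 + lam * D). split; auto. split; [rewrite HDeq; lra|].
      assert (lam * (1 + lam * D) * K = lam * (ell x' * D + cost d ell lam y c))
        by (rewrite <- Hcc; ring).
      rewrite H. specialize (Hu y c).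
      assert (0 <= lam*D) by (apply Rmult_le_pos; lra).
      assert (L * (lam*D) <= ell x' * (lam*D)) by (apply Rmult_le_compat_r; lra).
      assert (lam * u y <= lam * cost d ell lam y c) by (apply Rmult_le_compat_l; lra).
      lra.
Qed.
Lemma verif {X} (d : X -> X -> R) (ell : X -> R) (lam : R) (u : X -> R) :
  is_metric d -> 0 <= lam -> (forall x, 0 <= u x) ->
  (forall x y, u x * (1 + lam * d x y) <= ell x * d x y + u y) ->
  (forall x, lam * u x <= ell x) ->
  (forall x z, 0 < z -> z < ell x - lam * u x -> exists y, y <> x /\ u y + z * d x y <= u x) ->
  lsc_R d u /\ forall x, Rbar_plus (Rbar_mult (Finite lam) (Finite (u x)))
      (global_slope d (fun x => Finite (u x)) x) = Finite (ell x).
Proof.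
  intros Hm Hlam Hu HA Hg HB.
  assert (Hd0 : forall x y, 0 <= d x y) by apply Hm.
  assert (Hl0 : forall x, 0 <= ell x).
  { intro x. specialize (Hg x). specialize (Hu x). nra. }
  split.
  - intros x c Hc. change (c < u x) in Hc.
    exists ((u x - c) / (ell x + 1)). split.
    + apply Rdiv_lt_0_compat; [lra| specialize (Hl0 x); lra].
    + intros y Hy. change (c < u y). specialize (HA x y). specialize (Hl0 x).
      assert (Hk : ell x * d x y < u x - c).
      { assert (d x y * (ell x + 1) < u x - c).
        { apply (Rmult_lt_compat_r (ell x + 1)) in Hy; [|lra].
          unfold Rdiv in Hy. rewrite Rmult_assoc, Rinv_l in Hy; lra. }
        specialize (Hd0 x y). nra. }
      specialize (Hd0 x y). specialize (Hu x). clear Hy HB Hg. assert (0 <= u x * (lam * d x y)) by (apply Rmult_le_pos; [lra|apply Rmult_le_pos; lra]). nra.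
  - intro x. change (global_slope d _ x) with (Lub_Rbar (slope_set d (fun x => Finite (u x)) x (u x))).
    set (g := ell x - lam * u x).
    assert (Hgdef : g = ell x - lam * u x) by reflexivity. clearbody g.
    assert (Hgg : 0 <= g) by (rewrite Hgdef; specialize (Hg x); lra).
    assert (H0in : slope_set d (fun x => Finite (u x)) x (u x) 0) by (left; lra).
    assert (Hlub : is_lub_Rbar (slope_set d (fun x => Finite (u x)) x (u x)) (Finite g)).
    { split.
      - intros z [Hz|[y [Hy Hle]]]; simpl; [lra|].
        simpl in Hle. specialize (HA x y). pose proof (metric_pos d x y Hm Hy).
        rewrite Hgdef. destruct (Rle_dec z (ell x - lam * u x)) as [h|h]; auto.
        exfalso. apply Rnot_le_lt in h. nra.
      - intros b Hb. destruct b as [b| |]; simpl; auto.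
        + pose proof (Hb 0 H0in) as h0. simpl in h0.
          destruct (Rle_dec g b) as [h|h]; auto. exfalso. apply Rnot_le_lt in h.
          destruct (HB x ((b + g)/2)) as [y [Hy Hle]]; [lra|rewrite Hgdef in h; lra|].
          assert (slope_set d (fun x => Finite (u x)) x (u x) ((b+g)/2)).
          { right. exists y. split; [exact Hy|simpl; lra]. }
          specialize (Hb _ H). simpl in Hb. lra.
        + apply (Hb 0 H0in). }
    rewrite (is_lub_Rbar_unique _ _ Hlub). simpl. f_equal. rewrite Hgdef. ring.
Qed.

Lemma part1 {X} (d : X -> X -> R) (ell : X -> R) (lam : R) :
  is_metric d -> (forall x, 0 <= ell x) -> lsc_R d ell ->
  inf_is_zero (fun x => Finite (ell x)) -> 0 < lam -> has_LSC_solution d lam ell.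
Proof.
  intros Hm He Hlsc Hinf Hl.
  set (E := fun x e => exists c, e = cost d ell lam x c).
  set (u := fun x => uinf (E x)).
  assert (Hsp : forall x, (forall e, E x e -> u x <= e) /\ (forall eta, 0 < eta -> exists e, E x e /\ e < u x + eta) /\ 0 <= u x).
  { intro x. apply uinf_spec.
    - exists (cost d ell lam x nil), nil. reflexivity.
    - intros e [c ->]. apply cost_pos; auto. }
  clearbody u.
  assert (Hu0 : forall x, 0 <= u x) by (intro x; apply Hsp).
  assert (Hle : forall y c, u y <= cost d ell lam y c).
  { intros y c. apply (proj1 (Hsp y)). exists c; reflexivity. }
  assert (Hd : forall x y, 0 <= d x y) by apply Hm.
  assert (Hg : forall x, lam * u x <= ell x).
  { intro x. pose proof (Hle x nil) as h. simpl in h.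
    apply (Rmult_le_compat_l lam) in h; [|lra].
    replace (lam * (ell x / lam)) with (ell x) in h by (field; lra). exact h. }
  assert (HA : forall x y, u x * (1 + lam * d x y) <= ell x * d x y + u y).
  { intros x y. apply le_eps. intros eta Heta.
    destruct (proj1 (proj2 (Hsp y)) eta Heta) as [e [[c ->] Hc]].
    pose proof (cost_cons d ell lam x y c (Rlt_le _ _ Hl) (Hd x y)) as Hcc.
    pose proof (Hle x (y :: c)) as h.
    assert (0 <= lam * d x y) by (apply Rmult_le_pos; [lra|apply Hd]).
    apply (Rmult_le_compat_r (1 + lam * d x y)) in h; lra. }
  assert (HB : forall x z, 0 < z -> z < ell x - lam * u x ->
     exists y, y <> x /\ u y + z * d x y <= u x).
  { intros x z Hz Hzg.
    set (g := ell x - lam * u x) in *. assert (Hgd : g = ell x - lam * u x) by reflexivity. clearbody g.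
    set (eps := (g - z) / 3). assert (Hed : g = z + 3 * eps) by (unfold eps; field). clearbody eps.
    assert (Heps : 0 < eps) by lra.
    destruct (Hlsc x (ell x - eps)) as [delta [Hdel Hball]].
    { simpl. lra. }
    assert (HL : forall x', d x x' < delta -> ell x - eps <= ell x').
    { intros x' h. specialize (Hball x' h). simpl in Hball. lra. }
    set (eta := Rmin (eps / lam) (eps * delta)).
    assert (Heta1 : lam * eta <= eps).
    { unfold eta. pose proof (Rmin_l (eps / lam) (eps * delta)).
      apply (Rmult_le_compat_l lam) in H; [|lra].
      replace (lam * (eps / lam)) with eps in H by (field; lra). exact H. }
    assert (Heta2 : eta <= eps * delta) by apply Rmin_r.
    assert (Heta0 : 0 < eta).
    { unfold eta. apply Rmin_glb_lt; [apply Rdiv_lt_0_compat|apply Rmult_lt_0_compat]; lra. }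
    clearbody eta.
    destruct (proj1 (proj2 (Hsp x)) eta Heta0) as [e [[c ->] Hc]].
    assert (Hxx : d x x < delta).
    { destruct Hm as [_ [H2 _]]. rewrite (proj2 (H2 x x) eq_refl). exact Hdel. }
    destruct (exit_lemma d ell lam u x delta (ell x - eps) Hm Hl Hle HL c x Hxx)
      as [Hleft|[y [P [H1 [H2 H3]]]]].
    - exfalso.
      assert (lam * cost d ell lam x c < lam * (u x + eta)) by (apply Rmult_lt_compat_l; lra).
      lra.
    - exists y. set (r := d x y) in *. assert (Hrd : d x y = r) by reflexivity. clearbody r.
      split.
      { intro Heq. subst y. destruct Hm as [_ [Hz0 _]].
        rewrite (proj2 (Hz0 x x) eq_refl) in Hrd. lra. }
      set (a := u x) in *. clearbody a.
      set (K := cost d ell lam x c) in *. clearbody K.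
      assert (HP : 1 <= P).
      { assert (0 <= lam * r) by (apply Rmult_le_pos; lra). lra. }
      assert (h1 : lam * P * K <= lam * P * (a + eta)).
      { apply Rmult_le_compat_l; [apply Rmult_le_pos|]; lra. }
      set (M := ell x - eps - lam * a - lam * eta).
      assert (HM : z + 2 * eps - lam * eta <= M) by (unfold M; lra).
      assert (HM0 : 0 <= M) by lra.
      assert (h2 : lam * r * M <= (P - 1) * M) by (apply Rmult_le_compat_r; lra).
      assert (h3 : lam * (a - u y) >= (P - 1) * M - lam * eta) by (unfold M; nra).
      assert (h4 : lam * eta <= lam * (eps * r)).
      { apply Rmult_le_compat_l; [lra|].
        apply Rle_trans with (eps * delta); auto. apply Rmult_le_compat_l; lra. }
      assert (h5 : lam * r * (z + 2 * eps - lam * eta) <= lam * r * M).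
      { apply Rmult_le_compat_l; [apply Rmult_le_pos|]; lra. }
      assert (h6 : lam * r * z <= lam * r * (z + 2 * eps - lam * eta) - lam * (eps * r)).
      { assert (0 <= lam * r * (eps - lam * eta)) by (apply Rmult_le_pos; [apply Rmult_le_pos|]; lra).
        nra. }
      assert (h7 : lam * (z * r) <= lam * (a - u y)) by nra.
      apply Rmult_le_reg_l in h7; lra. }
  destruct (verif d ell lam u Hm (Rlt_le _ _ Hl) Hu0 HA Hg HB) as [Hls Heq].
  exists u. split; auto. split; [exact Hls|split; [|exact Heq]].
  split.
  - intro x. simpl. auto.
  - intros eps Heps. destruct Hinf as [_ Hinf].
    destruct (Hinf (eps * lam)) as [x Hx]; [apply Rmult_lt_0_compat; lra|].
    exists x. simpl in Hx |- *. specialize (Hg x).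
    apply (Rmult_lt_reg_l lam); lra.
Qed.

Lemma least_nat (P : nat -> Prop) : forall n, P n -> exists m, P m /\ forall i, (i < m)%nat -> ~ P i.
Proof.
  intro n. induction n as [n IH] using (well_founded_induction Wf_nat.lt_wf). intro Pn.
  destruct (classic (exists i, (i < n)%nat /\ P i)) as [[i [Hi Pi]]|Hno].
  - exact (IH i Hi Pi).
  - exists n. split; auto. intros i Hi Pi. apply Hno. eauto.
Qed.

Definition term {X} (d : X -> X -> R) (ell : X -> R) (s : nat -> X) (n : nat) : R :=
  ell (s n) * d (s n) (s (S n)).

Lemma Series_nonneg (a : nat -> R) : (forall n, 0 <= a n) -> ex_series a -> 0 <= Series a.
Proof.
  intros Ha Hex.
  assert (Series (fun _ => 0) = 0).
  { rewrite (Series_ext (fun _ => 0) (fun n => 0 * a n)) by (intro; ring).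
    rewrite Series_scal_l. ring. }
  rewrite <- H. apply Series_le; auto. intro n; split; [lra|auto].
Qed.

Lemma prefix_lemma {X} (d : X -> X -> R) (ell : X -> R) (s : nat -> X) (L : R) :
  is_metric d -> 0 <= L ->
  forall k, (forall i, (i <= k)%nat -> L <= ell (s i)) ->
  L * d (s 0%nat) (s (S k)) <= sum_f_R0 (term d ell s) k.
Proof.
  intros Hm HL k. induction k as [|k IH]; intros Hi; simpl; unfold term.
  - apply Rmult_le_compat_r; [apply Hm|]. apply Hi. lia.
  - assert (IH' := IH (fun i h => Hi i (le_S _ _ h))).
    assert (Ht : d (s 0%nat) (s (S (S k))) <= d (s 0%nat) (s (S k)) + d (s (S k)) (s (S (S k)))) by apply Hm.
    assert (L * d (s (S k)) (s (S (S k))) <= ell (s (S k)) * d (s (S k)) (s (S (S k)))).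
    { apply Rmult_le_compat_r; [apply Hm|]. apply Hi. lia. }
    assert (L * d (s 0%nat) (s (S (S k))) <= L * (d (s 0%nat) (s (S k)) + d (s (S k)) (s (S (S k))))) by (apply Rmult_le_compat_l; lra).
    unfold term in IH'. lra.
Qed.

Lemma adm_shift {X} (d : X -> X -> R) (ell : X -> R) (s : nat -> X) m :
  ex_series (term d ell s) -> is_lim_seq (fun n => ell (s n)) 0 ->
  ex_series (term d ell (fun k => s (m + k)%nat)) /\
  is_lim_seq (fun n => ell (s (m + n)%nat)) 0 /\
  Series (term d ell s) = (match m with O => 0 | S k => sum_f_R0 (term d ell s) k end)
     + Series (term d ell (fun k => s (m + k)%nat)).
Proof.
  intros Hex Hlim.
  assert (Hext : forall k, term d ell s (m + k)%nat = term d ell (fun k => s (m + k)%nat) k).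
  { intro k. unfold term. rewrite Nat.add_succ_r. reflexivity. }
  split; [|split].
  - apply (ex_series_ext _ _ Hext). apply ex_series_incr_n. exact Hex.
  - apply (is_lim_seq_incr_n _ m) in Hlim.
    apply (is_lim_seq_ext (fun n => ell (s (n + m)%nat))); auto.
    intro n. rewrite Nat.add_comm. reflexivity.
  - destruct m as [|k].
    + rewrite Rplus_0_l. apply Series_ext. intro n. reflexivity.
    + rewrite (Series_incr_n _ (S k)); [|lia|exact Hex]. simpl pred.
      f_equal. apply Series_ext. exact Hext.
Qed.

Lemma adm_cons {X} (d : X -> X -> R) (ell : X -> R) (s : nat -> X) x :
  ex_series (term d ell s) -> is_lim_seq (fun n => ell (s n)) 0 ->
  let s' := fun n => match n with O => x | S k => s k end in
  ex_series (term d ell s') /\ is_lim_seq (fun n => ell (s' n)) 0 /\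
  Series (term d ell s') = ell x * d x (s 0%nat) + Series (term d ell s).
Proof.
  intros Hex Hlim s'.
  assert (Hext : forall k, term d ell s' (S k) = term d ell s k) by reflexivity.
  assert (Hex' : ex_series (term d ell s')).
  { apply ex_series_incr_1. apply (ex_series_ext (term d ell s)); auto. }
  split; [|split]; auto.
  - apply is_lim_seq_incr_1. exact Hlim.
  - rewrite (Series_incr_1 _ Hex'). f_equal; try (apply Series_ext; auto).
Qed.

Lemma part2 {X} (d : X -> X -> R) (ell : X -> R) :
  is_metric d -> (forall x, 0 <= ell x) -> lsc_R d ell -> H0 d ell -> has_LSC_solution d 0 ell.
Proof.
  intros Hm He Hlsc [xb [Hxbs Hxbl]].
  change (ex_series (term d ell xb)) in Hxbs.
  assert (Hd : forall x y, 0 <= d x y) by apply Hm.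
  assert (Htp : forall s n, 0 <= term d ell s n).
  { intros s n. unfold term. apply Rmult_le_pos; auto. }
  set (E := fun x e => exists s : nat -> X, s 0%nat = x /\ ex_series (term d ell s) /\
             is_lim_seq (fun n => ell (s n)) 0 /\ e = Series (term d ell s)).
  set (u := fun x => uinf (E x)).
  assert (Hsp : forall x, (forall e, E x e -> u x <= e) /\
     (forall eta, 0 < eta -> exists e, E x e /\ e < u x + eta) /\ 0 <= u x).
  { intro x. apply uinf_spec.
    - destruct (adm_cons d ell xb x Hxbs Hxbl) as [h1 [h2 h3]].
      eexists. eexists. split; [|split; [exact h1|split; [exact h2|reflexivity]]]. reflexivity.
    - intros e [s [_ [hs [_ ->]]]]. apply Series_nonneg; auto. }
  clearbody u.
  assert (Hu0 : forall x, 0 <= u x) by (intro x; apply Hsp).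
  assert (Hle : forall s, ex_series (term d ell s) -> is_lim_seq (fun n => ell (s n)) 0 ->
      u (s 0%nat) <= Series (term d ell s)).
  { intros s h1 h2. apply (proj1 (Hsp (s 0%nat))). exists s. auto. }
  assert (Hg : forall x, 0 * u x <= ell x) by (intro x; rewrite Rmult_0_l; auto).
  assert (HA : forall x y, u x * (1 + 0 * d x y) <= ell x * d x y + u y).
  { intros x y. replace (u x * (1 + 0 * d x y)) with (u x) by ring.
    apply le_eps. intros eta Heta.
    destruct (proj1 (proj2 (Hsp y)) eta Heta) as [e [[s [Hs0 [h1 [h2 ->]]]] Hc]].
    destruct (adm_cons d ell s x h1 h2) as [h3 [h4 h5]].
    pose proof (Hle _ h3 h4) as h. simpl in h. rewrite h5, Hs0 in h. lra. }
  assert (HB : forall x z, 0 < z -> z < ell x - 0 * u x ->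
     exists y, y <> x /\ u y + z * d x y <= u x).
  { intros x z Hz Hzg. rewrite Rmult_0_l, Rminus_0_r in Hzg.
    set (eps := (ell x - z) / 2). assert (Hed : ell x = z + 2 * eps) by (unfold eps; field). clearbody eps.
    assert (Heps : 0 < eps) by lra.
    destruct (Hlsc x (ell x - eps)) as [delta [Hdel Hball]].
    { simpl. lra. }
    assert (HL : forall x', d x x' < delta -> ell x - eps <= ell x').
    { intros x' h. specialize (Hball x' h). simpl in Hball. lra. }
    assert (Heta0 : 0 < eps * delta) by (apply Rmult_lt_0_compat; lra).
    destruct (proj1 (proj2 (Hsp x)) _ Heta0) as [e [[s [Hs0 [h1 [h2 ->]]]] Hc]].
    assert (Hzeps : 0 < z + eps) by lra.
    assert (Hex : exists n, delta <= d x (s n)).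
    { apply is_lim_seq_spec in h2.
      destruct (h2 (mkposreal _ Hzeps)) as [N HN].
      exists N. specialize (HN N (le_n N)). simpl in HN.
      rewrite Rminus_0_r in HN. apply Rabs_def2 in HN.
      apply Rnot_lt_le. intro Hin. specialize (HL _ Hin). lra. }
    destruct Hex as [n Hn].
    destruct (least_nat (fun n => delta <= d x (s n)) n Hn) as [m [Hm1 Hm2]].
    destruct m as [|k].
    { rewrite Hs0 in Hm1. destruct Hm as [_ [Hz0 _]].
      rewrite (proj2 (Hz0 x x) eq_refl) in Hm1. lra. }
    assert (Hpre : (ell x - eps) * d (s 0%nat) (s (S k)) <= sum_f_R0 (term d ell s) k).
    { apply prefix_lemma; auto; [lra|].
      intros i Hi. apply HL. apply Rnot_le_lt. apply Hm2. lia. }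
    destruct (adm_shift d ell s (S k) h1 h2) as [h3 [h4 h5]].
    pose proof (Hle _ h3 h4) as h6. cbv beta in h6. rewrite Nat.add_0_r in h6.
    rewrite Hs0 in Hpre.
    exists (s (S k)). split.
    { intro Heq. rewrite Heq in Hm1. destruct Hm as [_ [Hz0 _]].
      rewrite (proj2 (Hz0 x x) eq_refl) in Hm1. lra. }
    assert (eps * delta <= eps * d x (s (S k))) by (apply Rmult_le_compat_l; lra).
    rewrite Hed in Hpre. lra. }
  destruct (verif d ell 0 u Hm (Rle_refl 0) Hu0 HA Hg HB) as [Hls Heq].
  exists u. split; auto. split; [exact Hls|split; [|exact Heq]].
  split.
  - intro x. simpl. auto.
  - intros eps Heps.
    pose proof (Series_correct _ Hxbs) as Hc. apply is_series_Reals in Hc.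
    destruct (Hc eps Heps) as [N HN]. specialize (HN N (le_n N)).
    unfold R_dist in HN. apply Rabs_def2 in HN.
    destruct (adm_shift d ell xb (S N) Hxbs Hxbl) as [h3 [h4 h5]].
    pose proof (Hle _ h3 h4) as h6.
    exists (xb (S N + 0)%nat). change (u (xb (S N + 0)%nat) < eps). cbv beta in h6. lra.
Qed.

Lemma half_pos k : 0 < (/2)^k.
Proof. apply pow_lt. lra. Qed.

Lemma half_small t : 0 < t -> exists k, (/2)^k < t.
Proof.
  intro Ht. destruct (pow_lt_1_zero (/2)) with (y := t) as [N HN]; auto.
  { rewrite Rabs_right; lra. }
  exists N. specialize (HN N (le_n N)). rewrite Rabs_right in HN; auto.
  apply Rle_ge, Rlt_le, half_pos.
Qed.

Lemma ekeland {X} (d : X -> X -> R) (u : X -> R) :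
  is_metric d -> metric_complete d -> lsc_R d u -> (forall x, 0 <= u x) ->
  forall p alpha, 0 < alpha ->
  exists x, u x + alpha * d p x <= u p /\ forall y, y <> x -> u x < u y + alpha * d x y.
Proof.
  intros Hm Hc Hlsc Hu p alpha Hal.
  destruct Hm as [Hd0 [Hdz [Hsym Htri]]].
  assert (Hdd : forall x, d x x = 0) by (intro x; apply Hdz; reflexivity).
  set (Sr := fun z y => u y + alpha * d z y <= u z).
  assert (Srefl : forall z, Sr z z) by (intro z; unfold Sr; rewrite Hdd; lra).
  assert (Strans : forall z y w, Sr z y -> Sr y w -> Sr z w).
  { unfold Sr. intros z y w h1 h2. specialize (Htri z y w).
    assert (alpha * d z w <= alpha * (d z y + d y w)) by (apply Rmult_le_compat_l; lra). lra. }
  set (m := fun z => uinf (fun e => exists y, Sr z y /\ e = u y)).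
  assert (Hmsp : forall z, (forall y, Sr z y -> m z <= u y) /\
      (forall eta, 0 < eta -> exists y, Sr z y /\ u y < m z + eta)).
  { intro z. destruct (uinf_spec (fun e => exists y, Sr z y /\ e = u y)) as [h1 [h2 _]].
    - exists (u z), z. auto.
    - intros e [y [_ ->]]. auto.
    - split.
      + intros y hy. apply h1. exists y; auto.
      + intros eta heta. destruct (h2 eta heta) as [e [[y [hy ->]] he]]. exists y; auto. }
  clearbody m.
  assert (Hnext : forall (k : nat) z, exists y, Sr z y /\ u y < m z + (/2)^k).
  { intros k z. apply Hmsp, half_pos. }
  set (next := fun k z => proj1_sig (constructive_indefinite_description _ (Hnext k z))).
  assert (Hnx : forall k z, Sr z (next k z) /\ u (next k z) < m z + (/2)^k).
  { intros k z. unfold next. destruct constructive_indefinite_description as [y hy]. simpl. auto. }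
  clearbody next.
  set (z := fix zf (k : nat) : X := match k with O => p | S k' => next k' (zf k') end).
  assert (Hz0 : z 0%nat = p) by reflexivity.
  assert (HzS : forall k, z (S k) = next k (z k)) by reflexivity.
  clearbody z.
  assert (Hmono : forall k j, (k <= j)%nat -> Sr (z k) (z j)).
  { intros k j Hkj. induction Hkj as [|j Hkj IH]; auto.
    apply (Strans _ _ _ IH). rewrite HzS. apply Hnx. }
  assert (Hdiam : forall k w, Sr (z (S k)) w -> alpha * d (z (S k)) w < (/2)^k).
  { intros k w hw.
    assert (Sr (z k) w) by (apply (Strans _ (z (S k))); auto; rewrite HzS; apply Hnx).
    pose proof (proj1 (Hmsp (z k)) w H). pose proof (proj2 (Hnx k (z k))). rewrite <- HzS in H1.
    unfold Sr in hw. lra. }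
  assert (Hcauchy : forall eps, 0 < eps -> exists N, forall m n, (N <= m)%nat -> (N <= n)%nat ->
        d (z m) (z n) < eps).
  { intros eps Heps. destruct (half_small (alpha * eps / 2)) as [k Hk].
    { apply Rmult_lt_0_compat; [apply Rmult_lt_0_compat|]; lra. }
    exists (S k). intros a b Ha Hb.
    pose proof (Hdiam k _ (Hmono _ _ Ha)). pose proof (Hdiam k _ (Hmono _ _ Hb)).
    specialize (Htri (z a) (z (S k)) (z b)). rewrite (Hsym (z a) (z (S k))) in Htri.
    assert (alpha * d (z a) (z b) < alpha * eps) by
      (apply Rle_lt_trans with (alpha * (d (z (S k)) (z a) + d (z (S k)) (z b))); 
       [apply Rmult_le_compat_l; lra| lra]).
    apply Rmult_lt_reg_l in H1; auto. }
  destruct (Hc z Hcauchy) as [x Hx].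
  assert (HxS : forall k, Sr (z k) x).
  { intro k. apply NNPP. intro Hn. unfold Sr in Hn. apply Rnot_le_lt in Hn.
    set (gap := u x + alpha * d (z k) x - u (z k)) in *.
    assert (Hgap : 0 < gap) by (unfold gap; lra).
    destruct (Hlsc x (u x - gap / 2)) as [delta [Hdel Hball]]. { simpl. lra. }
    destruct (Hx (Rmin delta (gap / (4 * alpha)))) as [N HN].
    { apply Rmin_glb_lt; auto. apply Rdiv_lt_0_compat; lra. }
    set (n := Nat.max N k).
    specialize (HN n (Nat.le_max_l _ _)).
    pose proof (Rmin_l delta (gap / (4 * alpha))). pose proof (Rmin_r delta (gap / (4 * alpha))).
    assert (h1 : u x - gap / 2 < u (z n)).
    { specialize (Hball (z n)). simpl in Hball. apply Hball. rewrite Hsym. lra. }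
    assert (h2 : Sr (z k) (z n)) by (apply Hmono; apply Nat.le_max_r).
    unfold Sr in h2.
    assert (h3 : alpha * d (z n) x < gap / 4).
    { assert (alpha * d (z n) x < alpha * (gap / (4 * alpha))) by (apply Rmult_lt_compat_l; lra).
      replace (alpha * (gap / (4 * alpha))) with (gap / 4) in H1 by (field; lra). exact H1. }
    assert (h4 : alpha * d (z k) x <= alpha * (d (z k) (z n) + d (z n) x)) by (apply Rmult_le_compat_l; [lra|apply Htri]).
    unfold gap in *. lra. }
  exists x. split.
  - rewrite <- Hz0. apply HxS.
  - intros y Hy. apply Rnot_le_lt. intro Hle.
    assert (Hxy : Sr x y) by (unfold Sr; lra).
    assert (Hpos : 0 < d x y).
    { destruct (Hd0 x y) as [h|h]; auto. exfalso. apply Hy. symmetry. apply Hdz. auto. }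
    destruct (half_small (alpha * d x y / 2)) as [k Hk].
    { apply Rmult_lt_0_compat; [apply Rmult_lt_0_compat|]; lra. }
    pose proof (Hdiam k x (HxS (S k))).
    pose proof (Hdiam k y (Strans _ _ _ (HxS (S k)) Hxy)).
    specialize (Htri x (z (S k)) y). rewrite (Hsym x (z (S k))) in Htri.
    assert (alpha * d x y <= alpha * (d (z (S k)) x + d (z (S k)) y)) by (apply Rmult_le_compat_l; lra).
    lra.
Qed.

Lemma part3 {X} (d : X -> X -> R) (ell : X -> R) :
  is_metric d -> (forall x, 0 <= ell x) -> metric_complete d ->
  (exists u : X -> Rbar, is_solution d 0 ell u) -> H0 d ell.
Proof.
  intros Hm He Hc [u [Hlsc [[Hinf0 Hinfe] Heq]]].
  assert (Hfin : forall x, u x = Finite (real (u x))).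
  { intro x. specialize (Heq x). specialize (Hinf0 x).
    destruct (u x) eqn:Hux; auto.
    - exfalso. rewrite Rbar_mult_0_l in Heq. unfold global_slope in Heq. rewrite Hux in Heq.
      simpl in Heq. discriminate.
    - simpl in Hinf0. contradiction. }
  set (v := fun x => real (u x)) in *.
  assert (Huv : u = fun x => Finite (v x)).
  { apply FunctionalExtensionality.functional_extensionality. exact Hfin. }
  clearbody v. subst u.
  assert (Hv0 : forall x, 0 <= v x) by (intro x; exact (Hinf0 x)).
  assert (HG : forall x alpha, 0 < alpha -> (forall y, y <> x -> v x < v y + alpha * d x y) -> ell x <= alpha).
  { intros x alpha Hal Hy. specialize (Heq x). rewrite Rbar_mult_0_l in Heq.
    change (global_slope d _ x) with (Lub_Rbar (slope_set d (fun x => Finite (v x)) x (v x))) in Heq.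
    destruct (Lub_Rbar_correct (slope_set d (fun x => Finite (v x)) x (v x))) as [_ Hleast].
    assert (Hb : Rbar_le (Lub_Rbar (slope_set d (fun x => Finite (v x)) x (v x))) (Finite alpha)).
    { apply Hleast. intros z [hz|[y [hy hle]]]; simpl; [lra|].
      simpl in hle. specialize (Hy y hy).
      assert (0 < d x y).
      { destruct Hm as [Hd0 [Hdz _]]. destruct (Hd0 x y) as [h|h]; auto.
        exfalso. apply hy. symmetry. apply Hdz. auto. }
      apply Rnot_lt_le. intro Hlt.
      assert (alpha * d x y < z * d x y) by (apply Rmult_lt_compat_r; auto). lra. }
    destruct (Lub_Rbar _) as [r| |]; simpl in Heq, Hb; try discriminate; try contradiction.
    injection Heq. intro. lra. }
  assert (Hek : forall (n : nat) p, exists x, v x + (/2)^n * d p x <= v p /\ ell x <= (/2)^n).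
  { intros n p. destruct (ekeland d v Hm Hc Hlsc Hv0 p ((/2)^n) (half_pos n)) as [x [h1 h2]].
    exists x. split; auto. apply HG; auto. apply half_pos. }
  set (ek := fun n p => proj1_sig (constructive_indefinite_description _ (Hek n p))).
  assert (Hekp : forall n p, v (ek n p) + (/2)^n * d p (ek n p) <= v p /\ ell (ek n p) <= (/2)^n).
  { intros n p. unfold ek. destruct constructive_indefinite_description as [y hy]. simpl. auto. }
  clearbody ek.
  destruct (Hinfe 1) as [x0 _]; [lra|].
  set (xs := fix f (k : nat) : X := match k with O => x0 | S k' => ek k' (f k') end).
  assert (HxS : forall k, xs (S k) = ek k (xs k)) by reflexivity.
  clearbody xs.
  exists xs. split.
  - apply ex_series_incr_1.
    set (b := fun n => ell (xs (S n)) * d (xs (S n)) (xs (S (S n)))).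
    assert (Hb0 : forall n, 0 <= b n).
    { intro n. unfold b. apply Rmult_le_pos; auto. apply Hm. }
    assert (Hbn : forall n, b n <= 2 * (v (xs (S n)) - v (xs (S (S n))))).
    { intro n. unfold b. pose proof (Hekp n (xs n)) as [_ h1]. rewrite <- HxS in h1.
      pose proof (Hekp (S n) (xs (S n))) as [h2 _]. rewrite <- HxS in h2.
      simpl in h2. pose proof (half_pos n).
      assert (0 <= d (xs (S n)) (xs (S (S n)))) by apply Hm.
      assert (ell (xs (S n)) * d (xs (S n)) (xs (S (S n))) <= (/2)^n * d (xs (S n)) (xs (S (S n))))
        by (apply Rmult_le_compat_r; auto).
      lra. }
    assert (Hsum : forall n, sum_f_R0 b n <= 2 * (v (xs 1%nat) - v (xs (S (S n))))).
    { intro n. induction n as [|n IH]; simpl sum_f_R0; [apply Hbn|].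
      pose proof (Hbn (S n)). lra. }
    apply (ex_series_ext b); [intro; reflexivity|].
    apply ex_series_Reals_1. apply growing_cv.
    + intro n. simpl. pose proof (Hb0 (S n)). lra.
    + exists (2 * v (xs 1%nat)). intros r [i ->]. pose proof (Hsum i). pose proof (Hv0 (xs (S (S i)))). lra.
  - apply is_lim_seq_incr_1.
    apply (is_lim_seq_le_le (fun _ => 0) _ (fun n => (/2)^n)).
    + intro n. rewrite HxS. split; [apply He|apply Hekp].
    + apply is_lim_seq_const.
    + apply is_lim_seq_geom. rewrite Rabs_right; lra.
Qed.

Theorem corollary3p8 (X : Type) (d : X -> X -> R) (ell : X -> R) :
  is_metric d ->
  (forall x, 0 <= ell x) ->
  lsc_R d ell ->
  inf_is_zero (fun x => Finite (ell x)) ->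
  (forall lam, 0 < lam -> has_LSC_solution d lam ell) /\
  (H0 d ell -> has_LSC_solution d 0 ell) /\
  (metric_complete d -> ((exists u : X -> Rbar, is_solution d 0 ell u) <-> H0 d ell)).
Proof.
  intros Hm He Hlsc Hinf. split; [|split].
  - intros lam Hl. apply part1; auto.
  - intro H. apply part2; auto.
  - intro Hc. split.
    + apply part3; auto.
    + intro H. destruct (part2 d ell Hm He Hlsc H) as [v [_ Hs]].
      exists (fun x => Finite (v x)). exact Hs.
Qed.
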